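(* Let $(K,\mathrm{val})$ be a $2$-henselian valued field whose residue class field $F$ has characteristic $\neq2$, let $A$ be a subring with $B\subseteq A\subseteq K$, let $g\in G$, and let $M$ be a proper quasi-quadratic module in $F$ (i.e. $M\ne F$). Then $\Phi^A(M,[\![g]\!])$ is a quasi-quadratic module in $A$.
   Context: Let $(G,\le)$ be a totally ordered abelian group written multiplicatively with identity $e$; $G_{\ge e}=\{g\in G:g\ge e\}$, $G^2=\{g^2:g\in G\}$. Let $(K,\mathrm{val})$ be a valued field with surjective valuation $\mathrm{val}:K\to G\cup\{\infty\}$, valuation ring $B=\{x:\mathrm{val}(x)\ge e\}$, residue map $\pi:B\to F$, residue field $F$. A strict unit is $x\in B^\times$ with $\pi(x)=1$; when $\mathrm{char}F\ne2$, $2$-henselian is equivalent to every strict unit being a square in $K$. For a subring $A$ with $B\subseteq A\subseteq K$ put $H=\mathrm{val}(A^\times)$; $H$ is a convex subgroup of $G$ and $\mathrm{val}(A\setminus\{0\})=H\cup G_{\ge e}$. For $g\in G$: $\overline g$ is its class in $G/G^2$, $[\![g]\!]$ its class in $G/H^2$, $[g]$ its class in $G/H$; ''$\mathrm{val}(x)=\overline g$'' means $\overline{\mathrm{val}(x)}=\overline g$, and similarly for $[\![\cdot]\!]$ and $[\cdot]$. A quasi-quadratic module in a commutative ring $R$ is a subset $M\subseteq R$ with $M+M\subseteq M$ and $a^2M\subseteq M$ for all $a\in R$. A pseudo-angular component map is a map $\mathrm{p.an}:K^\times\to F^\times$ such that: (1) $\mathrm{p.an}(u)=\pi(u)$ for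 $u\in B^\times$; (2) $\mathrm{p.an}(ux)=\pi(u)\mathrm{p.an}(x)$ for $u\in B^\times,x\in K^\times$; (3) for all $g\in G$, $c\in F^\times$ there is $w\in K$ with $\mathrm{val}(w)=g$, $\mathrm{p.an}(w)=c$; (4) for nonzero $x_1,x_2$ with $x_1+x_2\ne0$: if $\mathrm{val}(x_1)<\mathrm{val}(x_2)$ then $\mathrm{p.an}(x_1+x_2)=\mathrm{p.an}(x_1)$; if $\mathrm{val}(x_1)=\mathrm{val}(x_2)$ and $\mathrm{p.an}(x_1)+\mathrm{p.an}(x_2)\ne0$ then $\mathrm{val}(x_1+x_2)=\mathrm{val}(x_1)$ and $\mathrm{p.an}(x_1+x_2)=\mathrm{p.an}(x_1)+\mathrm{p.an}(x_2)$; (5) if $x,y\in K^\times$, $\overline{\mathrm{val}(x)}=\overline{\mathrm{val}(y)}$ and $\mathrm{p.an}(x)=\mathrm{p.an}(y)$ then $y=u^2x$ for some $u\in K^\times$; (6) for $a,u\in K^\times$ there is $k\in F^\times$ with $\mathrm{p.an}(au^2)=\mathrm{p.an}(a)k^2$. Such a map exists under the hypotheses; fix one. For $g\in G$ and a quasi-quadratic module $M$ in $F$: $$\Phi^A(M,[\![g]\!])=\{x\in A\setminus\{0\}:\ \mathrm{val}(x)=\overline g,\ (\mathrm{val}(x)=[\![g]\!]\ \text{or}\ \mathrm{val}(x)>g),\ \mathrm{p.an}(x)\in M\}\cup\{0\}$$ (this depends only on $[\![g]\!]$). *)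

(* Defs.v *)
From HB Require Import structures.
From mathcomp Require Import all_boot all_order all_algebra.
Set Implicit Arguments. Unset Strict Implicit. Unset Printing Implicit Defensive.
Import GRing.Theory.
Local Open Scope ring_scope.

Record ordered_abelian_group := OAG {
  oag_car :> Type;
  gmul : oag_car -> oag_car -> oag_car;
  gone : oag_car;
  ginv : oag_car -> oag_car;
  gle : oag_car -> oag_car -> Prop;
  gmulA : forall x y z, gmul x (gmul y z) = gmul (gmul x y) z;
  gmulC : forall x y, gmul x y = gmul y x;
  gmul1 : forall x, gmul gone x = x;
  gmulV : forall x, gmul (ginv x) x = gone;
  gle_refl : forall x, gle x x;
  gle_trans : forall x y z, gle x y -> gle y z -> gle x z;
  gle_anti : forall x y, gle x y -> gle y x -> x = y;
  gle_total : forall x y, gle x y \/ gle y x;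
  gle_mul : forall x y z, gle x y -> gle (gmul x z) (gmul y z)
}.

Section Defs.
Variable G : ordered_abelian_group.

Definition glt (x y : G) : Prop := gle x y /\ x <> y.

(* order on G ∪ {∞}, with None = ∞ *)
Definition ole (a b : option G) : Prop :=
  match a, b with
  | _, None => True
  | None, Some _ => False
  | Some x, Some y => gle x y
  end.

Definition sq_class_eq (a b : G) : Prop := exists c : G, a = gmul b (gmul c c).

Definition sq_class_eq_in (S : G -> Prop) (a b : G) : Prop :=
  exists h : G, S h /\ a = gmul b (gmul h h).

Variables (K F : fieldType).

Definition is_valuation (val : K -> option G) : Prop :=
  [/\ forall x, val x = None <-> x = 0,
      forall x y a b, val x = Some a -> val y = Some b -> val (x * y) = Some (gmul a b),
      forall x y, ole (val x) (val (x + y)) \/ ole (val y) (val (x + y))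
    & forall g : G, exists x, val x = Some g].

Definition val_ring (val : K -> option G) (x : K) : Prop := ole (Some (gone G)) (val x).

Definition is_residue_map (val : K -> option G) (pi : K -> F) : Prop :=
  [/\ forall x y, val_ring val x -> val_ring val y -> pi (x + y) = pi x + pi y,
      forall x y, val_ring val x -> val_ring val y -> pi (x * y) = pi x * pi y,
      pi 1 = 1,
      forall c : F, exists x, val_ring val x /\ pi x = c
    & forall x, val_ring val x -> (pi x = 0 <-> ole (Some (gone G)) (val x) /\ val x <> Some (gone G))].

Definition strict_unit (val : K -> option G) (pi : K -> F) (x : K) : Prop :=
  val x = Some (gone G) /\ pi x = 1.

(* 2-henselian, in the form valid when char F <> 2 *)
Definition two_henselian (val : K -> option G) (pi : K -> F) : Prop :=
  forall x, strict_unit val pi x -> exists y : K, x = y ^+ 2.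

Definition is_subring (A : K -> Prop) : Prop :=
  [/\ A 0, A 1, forall x y, A x -> A y -> A (x - y) & forall x y, A x -> A y -> A (x * y)].

Definition unit_vals (val : K -> option G) (A : K -> Prop) (h : G) : Prop :=
  exists x, [/\ A x, x != 0, A x^-1 & val x = Some h].

Definition is_pseudo_angular (val : K -> option G) (pi : K -> F) (pan : K -> F) : Prop :=
  (forall x, x != 0 -> pan x != 0) /\
      (forall u, val u = Some (gone G) -> pan u = pi u) /\
      (forall u x, val u = Some (gone G) -> x != 0 -> pan (u * x) = pi u * pan x) /\
      (forall (g : G) (c : F), c != 0 -> exists w, val w = Some g /\ pan w = c) /\
      (forall x1 x2 a b, val x1 = Some a -> val x2 = Some b -> x1 + x2 != 0 ->
                 glt a b -> pan (x1 + x2) = pan x1) /\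
      (forall x1 x2 a, val x1 = Some a -> val x2 = Some a -> x1 + x2 != 0 ->
                 pan x1 + pan x2 != 0 ->
                 val (x1 + x2) = Some a /\ pan (x1 + x2) = pan x1 + pan x2) /\
      (forall x y a b, val x = Some a -> val y = Some b -> sq_class_eq a b ->
                 pan x = pan y -> exists u, u != 0 /\ y = u ^+ 2 * x) /\
      (forall a u, a != 0 -> u != 0 -> exists k, k != 0 /\ pan (a * u ^+ 2) = pan a * k ^+ 2).

Definition qq_module (M : F -> Prop) : Prop :=
  (forall x y, M x -> M y -> M (x + y)) /\ (forall a x, M x -> M (a ^+ 2 * x)).

Definition qq_module_in (A : K -> Prop) (S : K -> Prop) : Prop :=
  [/\ forall x, S x -> A x,
      forall x y, S x -> S y -> S (x + y)
    & forall a x, A a -> S x -> S (a ^+ 2 * x)].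

Definition Phi (val : K -> option G) (A : K -> Prop) (pan : K -> F) (M : F -> Prop) (g : G)
  (x : K) : Prop :=
  x = 0 \/
  (A x /\ x != 0 /\ exists a : G,
     [/\ val x = Some a, sq_class_eq a g,
         sq_class_eq_in (unit_vals val A) a g \/ glt g a
       & M (pan x)]).

End Defs.

(* Main.v *)
Require Import Defs.
From mathcomp Require Import all_boot all_order all_algebra.
From mathcomp Require Import ring.
From Stdlib Require Import Classical.
Import GRing.Theory.
Local Open Scope ring_scope.
Set Implicit Arguments. Unset Strict Implicit. Unset Printing Implicit Defensive.


Lemma gmul1r (G : ordered_abelian_group) (x : G) : gmul x (gone G) = x.
Proof. by rewrite gmulC gmul1. Qed.
Lemma gmulCA (G : ordered_abelian_group) (x y z : G) : gmul x (gmul y z) = gmul y (gmul x z).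
Proof. by rewrite !gmulA (gmulC x y). Qed.
Lemma gmulAC (G : ordered_abelian_group) (x y z : G) : gmul (gmul x y) z = gmul (gmul x z) y.
Proof. by rewrite -!gmulA (gmulC y z). Qed.
Lemma gmulV' (G : ordered_abelian_group) (x : G) : gmul x (ginv x) = gone G.
Proof. by rewrite gmulC gmulV. Qed.
Lemma gcancel (G : ordered_abelian_group) (x y z : G) : gmul x z = gmul y z -> x = y.
Proof.
move=> h; have := congr1 (fun w => gmul w (ginv z)) h.
by rewrite -!gmulA gmulV' !gmul1r.
Qed.
Lemma gle_cancel (G : ordered_abelian_group) (x y z : G) : gle (gmul x z) (gmul y z) -> gle x y.
Proof. move=> h; have := gle_mul (ginv z) h. by rewrite -!gmulA gmulV' !gmul1r. Qed.
Lemma gle_mull (G : ordered_abelian_group) (x y z : G) : gle x y -> gle (gmul z x) (gmul z y).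
Proof. rewrite !(gmulC z); apply: gle_mul. Qed.
Lemma gle_mul2 (G : ordered_abelian_group) (a b c d : G) :
  gle a b -> gle c d -> gle (gmul a c) (gmul b d).
Proof. move=> h1 h2; apply: gle_trans; [exact: (gle_mul c h1) | exact: (gle_mull b h2)]. Qed.
Lemma glt_mul (G : ordered_abelian_group) (x y z : G) : glt x y -> glt (gmul x z) (gmul y z).
Proof. case=> h1 h2; split; first exact: gle_mul. by move/gcancel. Qed.
Lemma glt_mull (G : ordered_abelian_group) (x y z : G) : glt x y -> glt (gmul z x) (gmul z y).
Proof. rewrite !(gmulC z); apply: glt_mul. Qed.
Lemma gle_lt_trans (G : ordered_abelian_group) (x y z : G) : gle x y -> glt y z -> glt x z.
Proof.
move=> h [h1 h2]; split; first exact: gle_trans h h1.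
move=> e; subst; apply: h2; exact: gle_anti.
Qed.
Lemma glt_le_trans (G : ordered_abelian_group) (x y z : G) : glt x y -> gle y z -> glt x z.
Proof.
move=> [h1 h2] h; split; first exact: gle_trans h1 h.
move=> e; subst; apply: h2; exact: gle_anti.
Qed.
Lemma glt_nle (G : ordered_abelian_group) (x y : G) : glt x y -> ~ gle y x.
Proof. move=> [h1 h2] h; apply: h2; exact: gle_anti. Qed.
Lemma nglt_le (G : ordered_abelian_group) (x y : G) : ~ glt x y -> gle y x.
Proof.
move=> h; case: (gle_total x y) => // h1.
case: (classic (x = y)) => [->|ne]; first exact: gle_refl.
by exfalso; apply: h.
Qed.
Lemma sq_eq1 (G : ordered_abelian_group) (x : G) : gmul x x = gone G -> x = gone G.
Proof.
move=> h; case: (gle_total (gone G) x) => h1.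
  have := gle_mull x h1; rewrite gmul1r h => h2; exact: gle_anti.
have := gle_mull x h1; rewrite gmul1r h => h2; exact: gle_anti.
Qed.
Lemma gle_inv (G : ordered_abelian_group) (x : G) : gle (gone G) x -> gle (ginv x) (gone G).
Proof. move=> h; have := gle_mul (ginv x) h; by rewrite gmul1 gmulV'. Qed.
Lemma gle_inv' (G : ordered_abelian_group) (x : G) : gle x (gone G) -> gle (gone G) (ginv x).
Proof. move=> h; have := gle_mul (ginv x) h; by rewrite gmul1 gmulV'. Qed.
Lemma ginvK (G : ordered_abelian_group) (x : G) : ginv (ginv x) = x.
Proof. apply: (@gcancel _ _ _ (ginv x)); by rewrite gmulV gmulV'. Qed.
Lemma glt_sq (G : ordered_abelian_group) (x : G) : glt (gone G) x -> glt (gone G) (gmul x x).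
Proof.
move=> [h1 h2]; split.
  have := gle_mul2 h1 h1; by rewrite gmul1.
by move=> e; apply: h2; rewrite (sq_eq1 (esym e)).
Qed.
Lemma gle_sq (G : ordered_abelian_group) (x : G) : gle (gone G) x -> gle (gone G) (gmul x x).
Proof. move=> h1; have := gle_mul2 h1 h1; by rewrite gmul1. Qed.

Lemma val_nz (G : ordered_abelian_group) (K : fieldType) (val : K -> option G) x :
  is_valuation val -> x != 0 -> exists a, val x = Some a.
Proof.
case=> Hv0 _ _ _ nz; case E: (val x) => [a|]; first by exists a.
by move/Hv0: E => E; rewrite E eqxx in nz.
Qed.

Lemma val_eq0 (G : ordered_abelian_group) (K : fieldType) (val : K -> option G) x a :
  is_valuation val -> val x = Some a -> x != 0.
Proof. case=> Hv0 _ _ _ E; apply/eqP => x0; move: (proj2 (Hv0 x) x0); by rewrite E. Qed.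

Lemma val1 (G : ordered_abelian_group) (K : fieldType) (val : K -> option G) :
  is_valuation val -> val 1 = Some (gone G).
Proof.
move=> Hv; have [d E] := val_nz Hv (oner_neq0 K).
case: Hv => _ HvM _ _; have := HvM _ _ _ _ E E; rewrite mulr1 E => [[h]].
congr Some; apply: (@gcancel _ _ _ d); by rewrite gmul1 -h.
Qed.

Lemma valN1 (G : ordered_abelian_group) (K : fieldType) (val : K -> option G) :
  is_valuation val -> val (-1) = Some (gone G).
Proof.
move=> Hv; have n1 : (-1 : K) != 0 by rewrite oppr_eq0 oner_eq0.
have [d E] := val_nz Hv n1.
have := val1 Hv; case: Hv => _ HvM _ _; have := HvM _ _ _ _ E E.
rewrite mulrNN mulr1 => -> [h]; by rewrite E (sq_eq1 h).
Qed.

Lemma valN (G : ordered_abelian_group) (K : fieldType) (val : K -> option G) y b :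
  is_valuation val -> val y = Some b -> val (- y) = Some b.
Proof.
move=> Hv E; have := valN1 Hv; case: Hv => _ HvM _ _ E1.
by rewrite -mulN1r (HvM _ _ _ _ E1 E) gmul1.
Qed.

Lemma valV (G : ordered_abelian_group) (K : fieldType) (val : K -> option G) x a :
  is_valuation val -> val x = Some a -> val (x^-1) = Some (ginv a).
Proof.
move=> Hv E; have nz := val_eq0 Hv E.
have [d Ed] := val_nz Hv (invr_neq0 nz).
have := val1 Hv; case: Hv => _ HvM _ _ E1.
have := HvM _ _ _ _ E Ed; rewrite mulfV // E1 => [[h]].
rewrite Ed; congr Some; apply: (@gcancel _ _ _ a); by rewrite gmulV gmulC h.
Qed.

Lemma val_add_lt (G : ordered_abelian_group) (K : fieldType) (val : K -> option G) x y a b :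
  is_valuation val -> val x = Some a -> val y = Some b -> glt a b -> x + y != 0 ->
  val (x + y) = Some a.
Proof.
move=> Hv Ea Eb lab nz; have [c Ec] := val_nz Hv nz.
have Eny := valN Hv Eb.
case: Hv => _ _ Hv3 _.
have h1 : gle a c.
  case: (Hv3 x y); rewrite ?Ec ?Ea ?Eb //= => h; exact: gle_trans (proj1 lab) h.
have h2 : gle c a.
  case: (Hv3 (x + y) (- y)); rewrite addrK ?Ec ?Ea ?Eny //= => h.
  by exfalso; apply: (glt_nle lab).
by rewrite Ec (gle_anti h2 h1).
Qed.

Lemma H_mul (G : ordered_abelian_group) (K : fieldType) (val : K -> option G) A h1 h2 :
  is_valuation val -> is_subring A ->
  unit_vals val A h1 -> unit_vals val A h2 -> unit_vals val A (gmul h1 h2).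
Proof.
move=> Hv [_ _ _ AM] [x [Ax nx Aix Ex]] [y [Ay ny Aiy Ey]].
exists (x * y); split; first exact: AM.
- by rewrite mulf_neq0.
- rewrite invfM; exact: AM.
- by case: Hv => _ HvM _ _; apply: HvM.
Qed.

Lemma H_inv (G : ordered_abelian_group) (K : fieldType) (val : K -> option G) A h :
  is_valuation val -> unit_vals val A h -> unit_vals val A (ginv h).
Proof.
move=> Hv [x [Ax nx Aix Ex]]; exists x^-1; split => //.
- by rewrite invr_neq0.
- by rewrite invrK.
- exact: valV Ex.
Qed.

Lemma H_conv (G : ordered_abelian_group) (K : fieldType) (val : K -> option G) A h h' :
  is_valuation val -> is_subring A -> (forall x, val_ring val x -> A x) ->
  unit_vals val A h -> gle (gone G) h' -> gle h' h -> unit_vals val A h'.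
Proof.
move=> Hv Hs HB [x [Ax nx Aix Ex]] l1 l2.
have [y Ey] : exists y, val y = Some h' by case: Hv => _ _ _ Hsur; apply: Hsur.
have ny := val_eq0 Hv Ey.
exists y; split => //.
  by apply: HB; rewrite /val_ring Ey.
have -> : y^-1 = x^-1 * (x * y^-1) by rewrite mulrA mulVf // mul1r.
case: Hs => _ _ _ AM; apply: AM => //; apply: HB.
have Eiy := valV Hv Ey.
case: Hv => _ HvM _ _; rewrite /val_ring (HvM _ _ _ _ Ex Eiy) /=.
have := gle_mul (ginv h') l2; by rewrite gmulV'.
Qed.

Lemma H_conv' (G : ordered_abelian_group) (K : fieldType) (val : K -> option G) A h h' :
  is_valuation val -> is_subring A -> (forall x, val_ring val x -> A x) ->
  unit_vals val A h -> gle h h' -> gle h' (gone G) -> unit_vals val A h'.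
Proof.
move=> Hv Hs HB Hh l1 l2.
rewrite -(ginvK h'); apply: H_inv => //.
apply: (H_conv Hv Hs HB (H_inv Hv Hh)); first exact: gle_inv'.
have := gle_mul (ginv h') l1; rewrite gmulV' => l3.
have := gle_mull (ginv h) l3; by rewrite gmulA gmulV gmul1 gmul1r.
Qed.

Lemma sq_ident (G : ordered_abelian_group) (b g c : G) :
  gmul (gmul b b) (gmul g (gmul c c)) = gmul g (gmul (gmul b c) (gmul b c)).
Proof. rewrite gmulCA; congr (gmul g _); rewrite -!gmulA; congr (gmul b _); exact: gmulCA. Qed.

Lemma sq_case (G : ordered_abelian_group) (Hp : G -> Prop) (g b ax : G) :
  (forall h1 h2, Hp h1 -> Hp h2 -> Hp (gmul h1 h2)) ->
  (forall h, Hp h -> Hp (ginv h)) ->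
  (forall h h', Hp h -> gle (gone G) h' -> gle h' h -> Hp h') ->
  (forall h h', Hp h -> gle h h' -> gle h' (gone G) -> Hp h') ->
  (~ Hp b -> gle (gone G) b) ->
  sq_class_eq ax g ->
  sq_class_eq_in Hp ax g \/ glt g ax ->
  sq_class_eq (gmul (gmul b b) ax) g /\
  (sq_class_eq_in Hp (gmul (gmul b b) ax) g \/ glt g (gmul (gmul b b) ax)).
Proof.
move=> hm hi hc hc' hb [c Ec] H2; split.
  by exists (gmul b c); rewrite Ec sq_ident.
case: (classic (Hp b)) => Hb.
- case: H2 => [[h [Hh Eh]]|lt].
    by left; exists (gmul b h); split; [exact: (hm) | rewrite Eh sq_ident].
  case: (classic (glt g (gmul (gmul b b) ax))) => lt2; first by right.
  left; exists (gmul b c); split; last by rewrite Ec sq_ident.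
  apply: (hm) => //.
  have l1 : glt (gone G) (gmul c c).
    case: lt => l l'; rewrite Ec in l l'; split.
      move: l; rewrite -{1}(gmul1r g) !(gmulC g); apply: gle_cancel.
    by move=> e; apply: l'; rewrite -e gmul1r.
  have l2 : gle (gmul c c) (ginv (gmul b b)).
    have := nglt_le lt2; rewrite Ec sq_ident => l.
    have l' : gle (gmul (gmul b b) (gmul c c)) (gone G).
      have := gle_mull (ginv g) l; rewrite gmulA gmulV gmul1.
      by rewrite -!gmulA (gmulCA c b c).
    have := gle_mul (ginv (gmul b b)) l'; by rewrite gmulAC gmulV' gmul1 gmul1.
  have Hcc : Hp (gmul c c).
    apply: (hc (ginv (gmul b b))) => //; [exact: hi (hm _ _ Hb Hb) | exact: proj1 l1].
  case: (gle_total (gone G) c) => lc.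
    apply: (hc _ _ Hcc lc); have := gle_mull c lc; by rewrite gmul1r.
  apply: (hc' _ _ Hcc _ lc); have := gle_mull c lc; by rewrite gmul1r.
- have eb := hb Hb; right.
  case: H2 => [[h [Hh Eh]]|lt].
    have lbh : glt (gone G) (gmul b h).
      split.
        apply: NNPP => nl; apply: Hb.
        have l := nglt_le (fun l => nl (proj1 l)).
        have := gle_mul (ginv h) l; rewrite -gmulA gmulV' gmul1r gmul1 => l'.
        exact: hc (hi _ Hh) eb l'.
      move=> e; apply: Hb; have -> : b = ginv h.
        by apply: (@gcancel _ _ _ h); rewrite gmulV -e.
      exact: hi.
    rewrite Eh sq_ident; have := glt_mull g (glt_sq lbh); by rewrite gmul1r.
  apply: glt_le_trans lt _; have := gle_mul ax (gle_sq eb); by rewrite gmul1.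
Qed.
Lemma fld_id (F : fieldType) (t p : F) : (2:F) != 0 -> p != 0 ->
  t = ((t/p+1)/2)^+2 * p + ((t/p-1)/2)^+2 * (-p).
Proof. move=> h2 hp. field. by rewrite h2 hp. Qed.

Theorem mainTheorem4 (G : ordered_abelian_group) (K F : fieldType)
  (val : K -> option G) (pi : K -> F) (pan : K -> F) (A : K -> Prop)
  (g : G) (M : F -> Prop) :
  is_valuation val ->
  is_residue_map val pi ->
  (2 : F) != 0 ->
  two_henselian val pi ->
  is_subring A ->
  (forall x, val_ring val x -> A x) ->
  is_pseudo_angular val pi pan ->
  qq_module M ->
  (exists c : F, ~ M c) ->
  qq_module_in A (Phi val A pan M g).
Proof.
move=> Hv _ h2 _ Hs HB [Hpan0 [P1 [P2 [P3 [P4a [P4b [P5 P6]]]]]]] [MD MS] [c0 Mc0].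
have Hs' := Hs; case: Hs' => A0 A1 AB AM.
have AN : forall y, A y -> A (- y) by move=> y Ay; rewrite -sub0r; exact: AB.
have AD : forall x y, A x -> A y -> A (x + y).
  by move=> x y Ax Ay; rewrite -(opprK y); apply: AB => //; exact: AN.
split.
- by move=> x [->|[Ax _]].
- move=> x y [->|Hx]; first by rewrite add0r.
  move=> [->|Hy]; first by rewrite addr0; right.
  case: Hx => [Ax [nx [a [Ea Sa Ha Ma]]]].
  case: Hy => [Ay [ny [b [Eb Sb Hb Mb]]]].
  case: (eqVneq (x + y) 0) => [->|nxy]; first by left.
  right; split; first exact: AD.
  split => //.
  case: (classic (glt a b)) => lab.
    exists a; split => //; first exact: val_add_lt Hv Ea Eb lab nxy.
    by rewrite (P4a x y a b).
  case: (classic (glt b a)) => lba.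
    exists b; rewrite addrC in nxy *; split => //; first exact: val_add_lt Hv Eb Ea lba nxy.
    by rewrite (P4a y x b a).
  have eab := gle_anti (nglt_le lab) (nglt_le lba); subst b.
  have npan : pan x + pan y != 0.
    apply/negP => /eqP E; apply: Mc0.
    have py : pan y = - pan x by apply/eqP; rewrite -addr_eq0 addrC E.
    rewrite (fld_id c0 h2 (Hpan0 x nx)); apply: MD; apply: MS => //.
    by rewrite -py.
  have [E1 E2] := P4b x y a Ea Eb nxy npan.
  by exists a; split => //; rewrite E2; apply: MD.
- move=> a x Aa [->|Hx]; first by left; rewrite mulr0.
  case: (eqVneq a 0) => [->|na]; first by left; rewrite expr2 !mul0r.
  case: Hx => [Ax [nx [ax [Ex Sx Hx Mx]]]].
  right; split; first by rewrite expr2; apply: (AM) => //; exact: (AM).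
  split; first by rewrite mulf_neq0 // expf_neq0.
  have [b Eb] := val_nz Hv na.
  exists (gmul (gmul b b) ax).
  have Hv' := Hv; case: Hv' => _ HvM _ _.
  have hb : ~ unit_vals val A b -> gle (gone G) b.
    move=> nH; case: (gle_total (gone G) b) => // l; exfalso; apply: nH.
    exists a; split => //; apply: HB; rewrite /val_ring (valV Hv Eb) /=.
    exact: gle_inv'.
  have [S1 S2] := @sq_case G (unit_vals val A) g b ax
    (fun h1 h2 => H_mul Hv Hs) (fun h => H_inv Hv)
    (fun h h' => H_conv Hv Hs HB) (fun h h' => H_conv' Hv Hs HB)
    hb Sx Hx.
  split => //.
    by rewrite expr2; apply: (HvM) => //; apply: (HvM).
  have [k [nk Ek]] := P6 x a nx na.
  by rewrite mulrC Ek mulrC; apply: MS.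
Qed.
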